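(* Assume $\chi(0)<0$ and conditions (C) and (N) hold. Then there exists $\zeta_1\in(0,\zeta_2)$ such that: (1) $G:[0,\infty)\to[0,\infty)$ is continuous, $G(s)>0$ for $s>0$, and the right derivative $G'(0+)$ exists (possibly $+\infty$) and $G'(0+)>1$; (2) $G([\zeta_1,\zeta_2])\subseteq[\zeta_1,\zeta_2]$ and $G([0,\infty))\subseteq[0,\zeta_2]$; (3) $\min_{s\in[\zeta_1,\zeta_2]}G(s)=G(\zeta_1)$, and $G(s)>s$ for all $s\in(0,\zeta_1]$.
   Context: Let $(X,\mu)$ be a finite measure space. Let $K:\mathbb{R}\times X\to[0,\infty)$ be measurable and integrable on $\mathbb{R}\times X$, with $\int_{\mathbb{R}}K(s,\tau)\,ds>0$ for every $\tau$. Let $g:[0,\infty)\times X\to[0,\infty)$ be measurable, with $g(0,\tau)=0$, $g(\cdot,\tau)$ continuous for each $\tau$, and the derivative $g'(0,\tau)$ at $0$ existing and positive. $\chi(z)=1-\int_X\int_{\mathbb{R}}K(s,\tau)g'(0,\tau)e^{-sz}\,ds\,d\mu(\tau)$. Condition (C): for each $\delta>0$ there is a measurable $C_\delta\geq0$ on $X$ with $g(u,\tau)\leq C_\delta(\tau)u$ for $u\in[0,\delta]$ and $\int_X C_\delta(\tau)\left(\int_{\mathbb{R}}K(s,\tau)ds\right)d\mu(\tau)<+\infty$. Condition (N): (N1) there is $\tau_0\in X$ with $\mu(\{\tau_0\})=1$ such that $g(v,\tau)$ is increasing in $v$ for each $\tau\neq\tau_0$ and $g(v,\tau_0)>0$ for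 $v>0$; $\tilde g(v)=\int_{X\setminus\{\tau_0\}}g(v,\tau)\left(\int_{\mathbb{R}}K(s,\tau)ds\right)d\mu(\tau)$. (N2) there is $\zeta_2>0$ such that $\Theta(v)=v-\tilde g(v)$ is strictly increasing on $[0,\zeta_2]$ and $\Theta(\zeta_2)>C\max_{v\geq0}g(v,\tau_0)$, $C=\int_{\mathbb{R}}K(s,\tau_0)ds$. Define $G(v)=\Theta^{-1}(Cg(v,\tau_0))$, $v\geq0$, with $\Theta^{-1}$ the inverse of $\Theta|_{[0,\zeta_2]}$. *)

(* Defs.v *)
From HB Require Import structures.
From mathcomp Require Import all_boot all_order all_algebra.
From mathcomp Require Import all_classical all_reals all_analysis.
Set Implicit Arguments. Unset Strict Implicit. Unset Printing Implicit Defensive.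
Import Order.TTheory GRing.Theory Num.Theory.
Import numFieldNormedType.Exports.
Local Open Scope classical_set_scope.
Local Open Scope ring_scope.

Section Defs.
Context (R : realType) (d : measure_display) (X : measurableType d).

Definition kint (K : R * X -> R) (tau : X) : \bar R :=
  (\int[lebesgue_measure]_(s in setT) (K (s, tau))%:E)%E.

Definition chi (mu : {measure set X -> \bar R}) (K : R * X -> R)
  (g'0 : X -> R) (z : R) : \bar R :=
  (1%:E - \int[mu]_(tau in setT)
     \int[lebesgue_measure]_(s in setT) (K (s, tau) * g'0 tau * expR (- (s * z)))%:E)%E.

Definition gtilde (mu : {measure set X -> \bar R}) (K : R * X -> R)
  (g : R -> X -> R) (tau0 : X) (v : R) : R :=
  fine (\int[mu]_(tau in ~` [set tau0]) ((g v tau)%:E * kint K tau))%E.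

Definition Theta mu K g tau0 (v : R) : R := v - gtilde mu K g tau0 v.

Definition Theta_inv mu K g tau0 (zeta2 : R) (y : R) : R :=
  xget 0 [set v | 0 <= v <= zeta2 /\ Theta mu K g tau0 v = y].

Definition Gmap mu K g tau0 zeta2 (v : R) : R :=
  Theta_inv mu K g tau0 zeta2 (fine (kint K tau0) * g v tau0).

Definition condC (mu : {measure set X -> \bar R}) (K : R * X -> R)
  (g : R -> X -> R) : Prop :=
  forall delta : R, 0 < delta ->
    exists Cd : X -> R,
      measurable_fun setT Cd /\ (forall tau, 0 <= Cd tau) /\
      (forall tau u, 0 <= u <= delta -> g u tau <= Cd tau * u) /\
      (\int[mu]_(tau in setT) ((Cd tau)%:E * kint K tau) < +oo)%E.

End Defs.

(* Main.v *)
Require Import Defs.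
From HB Require Import structures.
From mathcomp Require Import all_boot all_order all_algebra.
From mathcomp Require Import all_classical all_reals all_analysis.
From mathcomp Require Import measurable_realfun.
From mathcomp Require Import ring lra.
Import Order.TTheory GRing.Theory Num.Theory.
Import numFieldNormedType.Exports.
Local Open Scope classical_set_scope.
Local Open Scope ring_scope.

Section Main.
Context (R : realType) (d : measure_display) (X : measurableType d)
  (mu : {finite_measure set X -> \bar R})
  (K : R * X -> R) (g : R -> X -> R) (g'0 : X -> R).
Hypothesis K_meas : measurable_fun setT K.
Hypothesis K_ge0 : forall p, 0 <= K p.
Hypothesis K_int : (lebesgue_measure \x mu)%E.-integrable setT (EFin \o K).
Hypothesis K_pos : forall tau, (0 < kint K tau)%E.
Hypothesis g_meas : measurable_fun [set p : R * X | 0 <= p.1] (fun p => g p.1 p.2).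
Hypothesis g_ge0 : forall v tau, 0 <= v -> 0 <= g v tau.
Hypothesis g0 : forall tau, g 0 tau = 0.
Hypothesis g_cont : forall tau, {within `[0, +oo[, continuous (fun v => g v tau)}.
Hypothesis g'0_der : forall tau,
     (fun h => (g h tau - g 0 tau) / h) @ 0^'+ --> g'0 tau.
Hypothesis g'0_pos : forall tau, 0 < g'0 tau.
Hypothesis chi0 : (chi mu K g'0 0 < 0)%E.
Hypothesis HC : condC mu K g.
Variable tau0 : X.
Hypothesis tau0_meas : measurable [set tau0].
Hypothesis tau0_mu : mu [set tau0] = 1%E.
Hypothesis g_incr : forall tau, tau <> tau0 ->
     forall v w, 0 <= v -> v <= w -> g v tau <= g w tau.
Hypothesis g_tau0_pos : forall v, 0 < v -> 0 < g v tau0.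
Variable zeta2 : R.
Hypothesis zeta2_pos : 0 < zeta2.
Hypothesis Theta_incr : forall v w, 0 <= v -> v < w -> w <= zeta2 ->
     Theta mu K g tau0 v < Theta mu K g tau0 w.
Variable M : R.
Hypothesis M_attained : exists v, 0 <= v /\ g v tau0 = M.
Hypothesis M_max : forall v, 0 <= v -> g v tau0 <= M.
Hypothesis HN2 : fine (kint K tau0) * M < Theta mu K g tau0 zeta2.

Local Notation k := (kint K).
Local Notation B := (~` [set tau0]).
Local Notation Th := (Theta mu K g tau0).
Local Notation gt := (gtilde mu K g tau0).

Lemma k_ge0 tau : (0 <= k tau)%E.
Proof. by apply: integral_ge0 => s _; rewrite lee_fin. Qed.

Lemma k_meas : measurable_fun [set: X] (k : X -> \bar R).
Proof.
have := @measurable_fun_fubini_tonelli_G _ _ _ _ _ (@lebesgue_measure R) (EFin \o K).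
move=> H; apply: H; first by case/integrableP: K_int.
by move=> x /=; rewrite lee_fin.
Qed.

Lemma int_k_lty : (\int[mu]_tau k tau < +oo)%E.
Proof.
have := @integrable21ltyP _ _ _ _ _ (@lebesgue_measure R) mu (EFin \o K).
move=> /(_ (measurable_int _ K_int))/proj1/(_ K_int).
congr (_ < _)%E; apply: eq_integral => tau _.
by apply: eq_integral => s _ /=; rewrite ger0_norm.
Qed.

Lemma mB : measurable B.
Proof. exact: measurableC. Qed.

Lemma k_tau0_fin : k tau0 \is a fin_num.
Proof.
have h1 : (\int[mu]_(tau in [set tau0]) k tau = k tau0)%E.
  rewrite (_ : (\int[mu]_(tau in [set tau0]) k tau =
                \int[mu]_(tau in [set tau0]) cst (k tau0) tau)%E).
    rewrite integral_cst //; transitivity (k tau0 * 1)%E; last exact: mule1.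
    by congr (_ * _)%E; exact: tau0_mu.
  by apply: eq_integral => x /[!inE] ->.
have h2 : (\int[mu]_(tau in [set tau0]) k tau <= \int[mu]_tau k tau)%E.
  apply: ge0_subset_integral => //; first exact: k_meas.
  by move=> *; exact: k_ge0.
rewrite ge0_fin_numE ?k_ge0 //.
by rewrite -h1 (le_lt_trans h2 int_k_lty).
Qed.

Lemma k_ae_fin : {ae mu, forall tau, k tau \is a fin_num}.
Proof.
have : mu.-integrable setT k.
  apply/integrableP; split; first exact: k_meas.
  under eq_integral do rewrite gee0_abs ?k_ge0 //.
  exact: int_k_lty.
move/(integrable_ae measurableT); apply: filterS => x /=; exact.
Qed.

Definition C := fine (k tau0).

Lemma C_gt0 : 0 < C.
Proof.
by rewrite /C -lte_fin fineK ?K_pos // k_tau0_fin.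
Qed.
Lemma mD0 : measurable [set p : R * X | 0 <= p.1].
Proof.
have := @measurable_fst _ _ R X measurableT _ (measurable_itv `[0, +oo[).
rewrite setTI; congr measurable; apply/seteqP; split => p /=;
  by rewrite in_itv /= andbT.
Qed.

Lemma gv_meas v : 0 <= v -> measurable_fun [set: X] (g v).
Proof.
move=> v0.
have -> : g v = (fun p => g p.1 p.2) \o (fun tau : X => (v, tau)) by [].
apply: (measurable_comp mD0 _ g_meas).
  by move=> p /= [tau _ <-] /=.
exact: measurable_fun_pair.
Qed.

Lemma integrand_meas v : 0 <= v ->
  measurable_fun [set: X] (fun tau => ((g v tau)%:E * k tau)%E).
Proof.
move=> v0; apply: emeasurable_funM; last exact: k_meas.
exact/measurable_EFinP/gv_meas.
Qed.

Definition Dpack := cid (@HC zeta2 zeta2_pos).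
Definition Dd := proj1_sig Dpack.
Lemma Dd_meas : measurable_fun setT Dd.
Proof. by have [] := proj2_sig Dpack. Qed.
Lemma Dd_ge0 tau : 0 <= Dd tau.
Proof. by have [_ []] := proj2_sig Dpack. Qed.
Lemma Dd_bound tau u : 0 <= u <= zeta2 -> g u tau <= Dd tau * u.
Proof. by have [_ [_ [H _]]] := proj2_sig Dpack; apply: H. Qed.
Lemma Dd_int : (\int[mu]_(tau in setT) ((Dd tau)%:E * k tau) < +oo)%E.
Proof. by have [_ [_ []]] := proj2_sig Dpack. Qed.

Lemma Dk_meas : measurable_fun [set: X] (fun tau => ((Dd tau)%:E * k tau)%E).
Proof.
apply: emeasurable_funM; last exact: k_meas.
exact/measurable_EFinP/Dd_meas.
Qed.

Definition Aint := (\int[mu]_(tau in setT) ((Dd tau)%:E * k tau))%E.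
Definition A := fine Aint.

Lemma Aint_ge0 : (0 <= Aint)%E.
Proof.
by apply: integral_ge0 => tau _; rewrite mule_ge0 ?k_ge0 // lee_fin Dd_ge0.
Qed.

Lemma Aint_fin : Aint \is a fin_num.
Proof. by rewrite ge0_fin_numE ?Aint_ge0 // Dd_int. Qed.

Lemma A_ge0 : 0 <= A.
Proof. by rewrite /A fine_ge0 // Aint_ge0. Qed.

Definition Iv v := (\int[mu]_(tau in B) ((g v tau)%:E * k tau))%E.

Lemma Iv_ge0 v : 0 <= v -> (0 <= Iv v)%E.
Proof.
by move=> v0; apply: integral_ge0 => tau _; rewrite mule_ge0 ?k_ge0 // lee_fin g_ge0.
Qed.

Lemma Iv_le v : 0 <= v <= zeta2 -> (Iv v <= (v * A)%:E)%E.
Proof.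
move=> /andP[v0 vz].
apply: (@le_trans _ _ (\int[mu]_(tau in B) (v%:E * ((Dd tau)%:E * k tau)))%E).
  apply: ge0_le_integral => //; first exact: mB.
  - by move=> tau _; rewrite mule_ge0 ?k_ge0 // lee_fin g_ge0.
  - exact/measurable_funTS/integrand_meas.
  - apply: emeasurable_funM; first exact: measurable_cst.
    exact/measurable_funTS/Dk_meas.
  - move=> tau _; rewrite muleA -EFinM; apply: lee_wpmul2r; first exact: k_ge0.
    by rewrite lee_fin mulrC Dd_bound // v0 vz.
rewrite ge0_integralZl //; first last.
- by move=> tau _; rewrite mule_ge0 ?k_ge0 // lee_fin Dd_ge0.
- exact/measurable_funTS/Dk_meas.
- exact: mB.
rewrite EFinM; apply: lee_wpmul2l; first by rewrite lee_fin.
rewrite /A fineK ?Aint_fin //.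
apply: ge0_subset_integral => //; first exact: mB.
- exact: Dk_meas.
- by move=> tau _; rewrite mule_ge0 ?k_ge0 // lee_fin Dd_ge0.
Qed.

Lemma Iv_fin v : 0 <= v <= zeta2 -> Iv v \is a fin_num.
Proof.
move=> /andP[v0 vz]; rewrite ge0_fin_numE ?Iv_ge0 //.
have h := @Iv_le v; rewrite v0 vz in h.
by rewrite (le_lt_trans (h isT)) ?ltry.
Qed.

Lemma gt_Iv v : gt v = fine (Iv v).
Proof. by []. Qed.

Lemma gt_ge0 v : 0 <= v -> 0 <= gt v.
Proof. by move=> v0; rewrite gt_Iv fine_ge0 // Iv_ge0. Qed.

Lemma gt_le v : 0 <= v <= zeta2 -> gt v <= v * A.
Proof.
move=> vb; rewrite gt_Iv -lee_fin fineK ?Iv_fin //; exact: Iv_le.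
Qed.

Lemma gt0 : gt 0 = 0.
Proof.
rewrite gt_Iv /Iv (_ : (fun tau => _) = cst 0%E) ?integral0 //.
by apply/funext => tau; rewrite g0 mul0e.
Qed.

Lemma gt_mono v w : 0 <= v -> v <= w -> w <= zeta2 -> gt v <= gt w.
Proof.
move=> v0 vw wz; have w0 := le_trans v0 vw.
rewrite !gt_Iv; apply: fine_le; rewrite ?Iv_fin ?v0 ?w0 ?wz ?(le_trans vw wz) //.
apply: ge0_le_integral => //; first exact: mB.
- by move=> tau _; rewrite mule_ge0 ?k_ge0 // lee_fin g_ge0.
- exact/measurable_funTS/integrand_meas.
- exact/measurable_funTS/integrand_meas.
- move=> tau Btau; apply: lee_wpmul2r; first exact: k_ge0.
  by rewrite lee_fin g_incr.
Qed.
Lemma ThE v : Th v = v - gt v.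
Proof. by []. Qed.

Lemma Th0 : Th 0 = 0.
Proof. by rewrite ThE gt0 subrr. Qed.

Lemma Th_lip {v w} : 0 <= v -> v <= w -> w <= zeta2 -> Th w - Th v <= w - v.
Proof.
move=> v0 vw wz; rewrite !ThE.
have := @gt_mono v w v0 vw wz; lra.
Qed.

Lemma Th_le {v w} : 0 <= v -> v <= w -> w <= zeta2 -> Th v <= Th w.
Proof.
move=> v0; rewrite le_eqVlt => /predU1P[->//|vw] wz.
by apply/ltW/Theta_incr.
Qed.

Lemma Th_dist {v w} : 0 <= v <= zeta2 -> 0 <= w <= zeta2 ->
  `|Th v - Th w| <= `|v - w|.
Proof.
move=> /andP[v0 vz] /andP[w0 wz].
have [vw|wv] := leP v w.
  have h1 := @Th_lip v w v0 vw wz; have h2 := @Th_le v w v0 vw wz.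
  rewrite distrC (distrC v) !ger0_norm ?subr_ge0 //.
have h1 := @Th_lip w v w0 (ltW wv) vz; have h2 := @Th_le w v w0 (ltW wv) vz.
by rewrite !ger0_norm ?subr_ge0 // ltW.
Qed.

Lemma Th_cont : {within `[0, zeta2], continuous Th}.
Proof.
apply/subspace_continuousP => x Ax.
apply/cvgrPdist_lt => e e0.
rewrite near_withinE; exists e => //= y xy Ay.
change (`|Th x - Th y| < e).
have hx : 0 <= x <= zeta2 by move: Ax; rewrite /= in_itv.
have hy : 0 <= y <= zeta2 by move: Ay; rewrite /= in_itv.
have := @Th_dist x y hx hy. rewrite /ball_ /= in xy. move=> H; exact: le_lt_trans H xy.
Qed.

Definition S := Th zeta2.

Lemma S_gt0 : 0 < S.
Proof. by rewrite /S -Th0; apply: Theta_incr. Qed.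

Definition Ti := Theta_inv mu K g tau0 zeta2.

Lemma Ti_spec {y} : 0 <= y <= S -> 0 <= Ti y <= zeta2 /\ Th (Ti y) = y.
Proof.
move=> yS.
have : exists v, 0 <= v <= zeta2 /\ Th v = y.
  have [] := @IVT R Th 0 zeta2 y (ltW zeta2_pos) Th_cont.
    rewrite Th0 -/S (min_idPl (ltW S_gt0)) (max_idPr (ltW S_gt0)) //.
  by move=> c; rewrite in_itv /= => cb <-; exists c.
exact: (xgetPex 0).
Qed.

Lemma Th_inj {v w} : 0 <= v <= zeta2 -> 0 <= w <= zeta2 -> Th v = Th w -> v = w.
Proof.
move=> /andP[v0 vz] /andP[w0 wz] e.
have [vw|wv|//] := ltgtP v w.
  by have := Theta_incr v w v0 vw wz; rewrite e ltxx.
by have := Theta_incr w v w0 wv vz; rewrite e ltxx.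
Qed.

Lemma Ti_Th {v} : 0 <= v <= zeta2 -> Ti (Th v) = v.
Proof.
move=> vb; have /andP[v0 vz] := vb.
have hy : 0 <= Th v <= S.
  by rewrite -Th0 /S !Th_le ?lexx.
have [h1 h2] := Ti_spec hy.
exact: Th_inj.
Qed.

Lemma Ti_cont : {within `[0, S], continuous Ti}.
Proof.
have := @segment_can_le_continuous R 0 zeta2 Th Ti (ltW zeta2_pos) Th_cont.
rewrite Th0; apply.
by move=> v; rewrite in_itv /= => vb; apply: Ti_Th.
Qed.

Local Notation G := (Gmap mu K g tau0 zeta2).

Lemma GE s : G s = Ti (C * g s tau0).
Proof. by []. Qed.

Lemma y_bound {s} : 0 <= s -> 0 <= C * g s tau0 <= S.
Proof.
move=> s0; rewrite mulr_ge0 ?g_ge0 ?(ltW C_gt0) //=.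
apply: ltW; apply: le_lt_trans HN2.
by rewrite ler_wpM2l ?(ltW C_gt0) // M_max.
Qed.

Lemma y_lt {s} : 0 <= s -> C * g s tau0 < S.
Proof.
move=> s0; apply: le_lt_trans HN2.
by rewrite ler_wpM2l ?(ltW C_gt0) // M_max.
Qed.

Lemma G_spec {s} : 0 <= s -> 0 <= G s <= zeta2 /\ Th (G s) = C * g s tau0.
Proof. by move=> s0; rewrite GE; apply: Ti_spec; apply: y_bound. Qed.

Lemma G0 : G 0 = 0.
Proof.
have h : (0:R) <= 0 <= zeta2 by apply/andP; split; [exact: le_refl | exact: ltW].
by rewrite GE g0 mulr0 -{1}Th0 (Ti_Th h).
Qed.

Lemma G_pos {s} : 0 < s -> 0 < G s.
Proof.
move=> s0; have [/andP[h1 _] h2] := G_spec (ltW s0).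
rewrite lt_neqAle h1 andbT; apply/eqP => E.
have := g_tau0_pos s s0; have := C_gt0.
by move: h2; rewrite -E Th0 => /esym/eqP; rewrite mulf_eq0 => /orP[]/eqP-> ; rewrite ltxx.
Qed.

Lemma Ti_in_cont {y} : 0 < y < S -> {for y, continuous Ti}.
Proof.
move=> yb; have [h _ _] := (continuous_within_itvP _ S_gt0).1 Ti_cont.
by apply: h; rewrite in_itv.
Qed.

Lemma Ti_right : Ti x @[x --> 0^'+] --> Ti 0.
Proof. by have [_ h _] := (continuous_within_itvP _ S_gt0).1 Ti_cont. Qed.

Lemma gtau0_cont : {within `[0, +oo[, continuous (fun s => C * g s tau0)}.
Proof.
have [h1 h2] := (continuous_within_itvcyP 0 (fun s => g s tau0)).1 (g_cont tau0).
apply/continuous_within_itvcyP; split.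
  move=> x xI; apply: cvgMl_tmp; exact: h1.
by apply: cvgMl_tmp.
Qed.

Lemma G_cont : {within `[0, +oo[, continuous G}.
Proof.
have [h1 h2] := (continuous_within_itvcyP 0 _).1 gtau0_cont.
apply/continuous_within_itvcyP; split.
  move=> x; rewrite in_itv /= andbT => x0.
  apply: continuous_comp; first by apply: h1; rewrite in_itv /= andbT.
  apply: Ti_in_cont; rewrite y_lt ?(ltW x0) // andbT.
  by rewrite mulr_gt0 ?C_gt0 ?g_tau0_pos.
apply/cvgrPdist_lt => e e0.
have := Ti_right; move/cvgrPdist_lt => /(_ e e0).
move=> [eta /= eta0 Heta].
move/cvgrPdist_lt: h2 => /(_ eta eta0) Hs.
have Ti0 : Ti 0 = 0 by have := G0; rewrite GE g0 mulr0.
near=> s.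
have s0 : 0 < s by near: s; exact: nbhs_right_gt.
have hs : `|C * g 0 tau0 - C * g s tau0| < eta by near: s; exact: Hs.
move: (Heta (C * g s tau0)); rewrite Ti0 => H; rewrite G0 GE; apply: H => /=.
  by move: hs; rewrite g0 mulr0.
by rewrite mulr_gt0 ?C_gt0 ?g_tau0_pos.
Unshelve. all: by end_near. Qed.
Lemma gq_cvg tau (u : R^nat) : (forall n, 0 < u n) -> u n @[n --> \oo] --> 0 ->
  g (u n) tau / u n @[n --> \oo] --> g'0 tau.
Proof.
move=> up uc.
have := (cvg_at_rightP _ _ _).1 (g'0_der tau) u (conj up uc).
by rewrite g0; under eq_fun do rewrite subr0.
Qed.

Lemma g'0_meas : measurable_fun [set: X] g'0.
Proof.
apply: (@measurable_fun_cvg _ _ _ _ (fun n tau => g (harmonic n) tau / harmonic n)).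
  move=> n; apply: measurable_funM; first exact/gv_meas/harmonic_ge0.
  exact: measurable_cst.
move=> tau _; apply: gq_cvg; first by move=> n; exact: harmonic_gt0.
exact: cvg_harmonic.
Qed.

Lemma g'0_le_Dd tau : g'0 tau <= Dd tau.
Proof.
have hc := g'0_der tau.
rewrite -(cvg_lim _ hc) //; apply: limr_le; first by apply/cvg_ex; eexists; exact: hc.
near=> h.
have h0 : 0 < h by near: h; exact: nbhs_right_gt.
have hz : h < zeta2 by near: h; exact: nbhs_right_lt.
rewrite g0 subr0 ler_pdivrMr //; apply: Dd_bound.
by rewrite (ltW h0) (ltW hz).
Unshelve. all: by end_near. Qed.

Lemma g'0k_meas : measurable_fun [set: X] (fun tau => ((g'0 tau)%:E * k tau)%E).
Proof.
apply: emeasurable_funM; last exact: k_meas.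
exact/measurable_EFinP/g'0_meas.
Qed.

Definition Lint := (\int[mu]_(tau in B) ((g'0 tau)%:E * k tau))%E.

Lemma Lint_ge0 : (0 <= Lint)%E.
Proof.
by apply: integral_ge0 => tau _; rewrite mule_ge0 ?k_ge0 // lee_fin ltW.
Qed.

Lemma Lint_fin : Lint \is a fin_num.
Proof.
rewrite ge0_fin_numE ?Lint_ge0 //.
apply: (@le_lt_trans _ _ (\int[mu]_(tau in B) ((Dd tau)%:E * k tau))%E).
  apply: ge0_le_integral => //; first exact: mB.
  - by move=> tau _; rewrite mule_ge0 ?k_ge0 // lee_fin ltW.
  - exact/measurable_funTS/g'0k_meas.
  - exact/measurable_funTS/Dk_meas.
  - by move=> tau _; apply: lee_wpmul2r; [exact: k_ge0 | rewrite lee_fin g'0_le_Dd].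
apply: le_lt_trans Dd_int.
apply: ge0_subset_integral => //; first exact: mB.
- exact: Dk_meas.
- by move=> tau _; rewrite mule_ge0 ?k_ge0 // lee_fin Dd_ge0.
Qed.

Definition L := fine Lint.
Lemma inner tau : (\int[lebesgue_measure]_(s in setT)
    (K (s, tau) * g'0 tau * expR (- (s * 0)))%:E = (g'0 tau)%:E * k tau)%E.
Proof.
under eq_integral do rewrite mulr0 oppr0 expR0 mulr1 EFinM.
rewrite ge0_integralZr //; first by rewrite muleC.
- apply: (measurable_fun_pair1 (f := EFin \o K)).
  exact: (measurable_int _ K_int).
- by move=> s _; rewrite lee_fin.
- by rewrite lee_fin ltW.
Qed.

Lemma chi_split : (\int[mu]_(tau in setT) ((g'0 tau)%:E * k tau) =
  (g'0 tau0 * C)%:E + Lint)%E.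
Proof.
rewrite -(setUCr [set tau0]) ge0_integral_setU //; first last.
- by rewrite /disj_set setICr.
- by move=> tau _; rewrite mule_ge0 ?k_ge0 // lee_fin ltW.
- exact/measurable_funTS/g'0k_meas.
- exact: mB.
congr (_ + _)%E.
rewrite (_ : (\int[mu]_(tau in [set tau0]) ((g'0 tau)%:E * k tau) =
              \int[mu]_(tau in [set tau0]) cst ((g'0 tau0)%:E * k tau0) tau)%E).
  rewrite integral_cst //; transitivity (((g'0 tau0)%:E * k tau0) * 1)%E.
    by congr (_ * _)%E; exact: tau0_mu.
  by rewrite mule1 /C EFinM fineK // k_tau0_fin.
by apply: eq_integral => x /[!inE] ->.
Qed.

Lemma key_ineq : 1 < g'0 tau0 * C + L.
Proof.
have := chi0; rewrite /chi.
under eq_integral do rewrite inner.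
rewrite chi_split /L -{1}(fineK Lint_fin) -EFinD ?EFinB lte_fin.
lra.
Qed.
Lemma dct_seq (v : R^nat) : (forall n, 0 < v n <= zeta2) ->
  v n @[n --> \oo] --> 0 -> gt (v n) / v n @[n --> \oo] --> L.
Proof.
move=> vb vc.
have v0 n : 0 < v n by have /andP[] := vb n.
pose fn := fun n tau => ((g (v n) tau / v n)%:E * k tau)%E.
have mfn n : measurable_fun B (fn n).
  apply/measurable_funTS; apply: emeasurable_funM; last exact: k_meas.
  apply/measurable_EFinP; apply: measurable_funM; last exact: measurable_cst.
  exact/gv_meas/ltW.
have mf : measurable_fun B (fun tau => ((g'0 tau)%:E * k tau)%E).
  exact/measurable_funTS/g'0k_meas.
have ff : {ae mu, forall tau, B tau -> fn ^~ tau @ \oo --> ((g'0 tau)%:E * k tau)%E}.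
  apply: filterS k_ae_fin => tau kf Btau.
  rewrite /fn -(fineK kf) -EFinM.
  under eq_fun do rewrite -EFinM.
  apply/fine_cvgP; split; first exact: nearW.
  by apply: cvgMr_tmp; apply: gq_cvg.
have ig : mu.-integrable B (fun tau => ((Dd tau)%:E * k tau)%E).
  apply/integrableP; split; first exact/measurable_funTS/Dk_meas.
  under eq_integral do rewrite gee0_abs ?mule_ge0 ?k_ge0 ?lee_fin ?Dd_ge0 //.
  apply: le_lt_trans Dd_int.
  apply: ge0_subset_integral => //; first exact: mB.
  - exact: Dk_meas.
  - by move=> tau _; rewrite mule_ge0 ?k_ge0 // lee_fin Dd_ge0.
have fg : {ae mu, forall tau n, B tau -> (`|fn n tau| <= (Dd tau)%:E * k tau)%E}.
  apply: aeW => tau n Btau.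
  rewrite /fn gee0_abs; last by rewrite mule_ge0 ?k_ge0 // lee_fin divr_ge0 ?g_ge0 ?ltW.
  apply: lee_wpmul2r; first exact: k_ge0.
  rewrite lee_fin ler_pdivrMr //; apply: Dd_bound.
  by have /andP[a b] := vb n; rewrite ltW // b.
have [_ _ hlim] := dominated_convergence mB mfn mf ff ig fg.
have eqn n : (\int[mu]_(tau in B) fn n tau = ((v n)^-1 * gt (v n))%:E)%E.
  rewrite /fn.
  under eq_integral do rewrite EFinM muleAC muleC.
  rewrite ge0_integralZl //; first last.
  - by rewrite lee_fin invr_ge0 ltW.
  - by move=> tau _; rewrite mule_ge0 ?k_ge0 // lee_fin g_ge0 // ltW.
  - exact/measurable_funTS/integrand_meas/ltW.
  - exact: mB.
  by rewrite EFinM gt_Iv fineK // Iv_fin //; have /andP[a b] := vb n; rewrite ltW // b.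
move: hlim; rewrite -/Lint -(fineK Lint_fin) -/L.
under eq_fun do rewrite eqn.
move/fine_cvgP => [_]; rewrite /comp /=.
by under eq_fun do rewrite mulrC.
Qed.

Lemma phi_cvg : (fun u => gt u / u) @ 0^'+ --> L.
Proof.
apply/cvg_at_rightP => u [up uc].
have := cvgr_le _ uc _ zeta2_pos => -[N _ HN].
rewrite -(cvg_shiftn N).
apply: (@dct_seq (fun n => u (n + N)%N)).
  by move=> n; rewrite up HN //= leq_addl.
by rewrite cvg_shiftn.
Qed.
Lemma G_right : (G h) @[h --> 0^'+] --> (0:R)^'+.
Proof.
move=> P /= [eta /= eta0 HP].
have [_ h2] := (continuous_within_itvcyP 0 _).1 G_cont.
move/cvgrPdist_lt: h2 => /(_ _ eta0) Hs.
change (\forall h \near 0^'+, P (G h)).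
near=> h.
have h0 : 0 < h by near: h; exact: nbhs_right_gt.
have hs : `|G 0 - G h| < eta by near: h; exact: Hs.
apply: HP; last exact: G_pos.
by move: hs; rewrite G0.
Unshelve. all: by end_near. Qed.

Lemma phiG : (fun h => gt (G h) / G h) @ 0^'+ --> L.
Proof.
have := cvg_comp _ _ G_right phi_cvg.
by [].
Qed.

Lemma cq : (fun h => C * g h tau0 / h) @ 0^'+ --> C * g'0 tau0.
Proof.
have := g'0_der tau0; rewrite g0.
under eq_fun do rewrite subr0.
move=> H; under eq_fun do rewrite -mulrA.
exact: cvgMl_tmp.
Qed.

Lemma ident : \forall h \near 0^'+,
  h / G h = (1 - gt (G h) / G h) * (C * g h tau0 / h)^-1.
Proof.
near=> h.
have h0 : 0 < h by near: h; exact: nbhs_right_gt.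
have u0 := G_pos h0.
have [_ e] := G_spec (ltW h0).
have y0 : 0 < C * g h tau0 by rewrite mulr_gt0 ?C_gt0 ?g_tau0_pos.
move: e; rewrite ThE => e.
have -> : 1 - gt (G h) / G h = (C * g h tau0) / G h.
  by rewrite -e mulrBl divff ?gt_eqF.
by rewrite invf_div mulrAC mulrCA mulfV ?gt_eqF // mulr1.
Unshelve. all: by end_near. Qed.

Lemma rho_ex : exists rho : R, 0 <= rho < 1 /\ (fun h => h / G h) @ 0^'+ --> rho.
Proof.
have c0 : 0 < C * g'0 tau0 by rewrite mulr_gt0 ?C_gt0.
have hl : (fun h => h / G h) @ 0^'+ --> (1 - L) * (C * g'0 tau0)^-1.
  have ident' : \forall h \near 0^'+,
      (1 - gt (G h) / G h) * (C * g h tau0 / h)^-1 = h / G h.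
    by apply: filterS ident => h ->.
  apply: cvg_trans (near_eq_cvg ident') _.
  apply: cvgM; first by apply: cvgB; [exact: cvg_cst | exact: phiG].
  by apply: cvgV; [rewrite gt_eqF | exact: cq].
exists ((1 - L) * (C * g'0 tau0)^-1); split; last exact: hl.
apply/andP; split.
  rewrite -(cvg_lim _ hl) //; apply: limr_ge; first by apply/cvg_ex; eexists; exact: hl.
  near=> h.
  have h0 : 0 < h by near: h; exact: nbhs_right_gt.
  by rewrite divr_ge0 // ltW // G_pos.
rewrite ltr_pdivrMr // mul1r.
have := key_ineq; rewrite [g'0 tau0 * C]mulrC; lra.
Unshelve. all: by end_near. Qed.
Lemma Gbig : exists2 eps, 0 < eps & forall h, 0 < h < eps -> h < G h.
Proof.
have [rho [/andP[r0 r1] hr]] := rho_ex.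
have e0 : 0 < 1 - rho by rewrite subr_gt0.
move/cvgrPdist_lt: hr => /(_ _ e0) [eps /= eps0 H].
exists eps => // h /andP[h0 he].
have Gh := G_pos h0.
have : `|rho - h / G h| < 1 - rho.
  by apply: H => //=; rewrite sub0r normrN gtr0_norm.
rewrite ltr_distlC => /andP[_]; rewrite subrKC => h1.
by rewrite -subr_gt0; move: h1; rewrite ltr_pdivrMr // mul1r subr_gt0.
Qed.

Lemma Gder : exists l : \bar R, (1%:E < l)%E /\
  (fun h => ((G h - G 0) / h)%:E) @ 0^'+ --> l.
Proof.
have [rho [/andP[r0 r1] hr]] := rho_ex.
have eq : \forall h \near 0^'+, (G h - G 0) / h = (h / G h)^-1.
  near=> h; have h0 : 0 < h by near: h; exact: nbhs_right_gt.
  by rewrite G0 subr0 invf_div.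
have [rz|rp] := eqVneq rho 0.
  exists +oo%E; split; first exact: ltry.
  apply/cvgeyPge => A.
  set A' := Num.max A 1.
  have A'0 : 0 < A' by rewrite lt_max ltr01 orbT.
  have iA : 0 < A'^-1 by rewrite invr_gt0.
  move/cvgrPdist_lt: hr => /(_ _ iA) H.
  near=> h; have h0 : 0 < h by near: h; exact: nbhs_right_gt.
  have Gh := G_pos h0.
  have : `|rho - h / G h| < A'^-1 by near: h.
  rewrite rz sub0r normrN gtr0_norm ?divr_gt0 // => hl.
  rewrite lee_fin; apply: (@le_trans _ _ A'); first by rewrite le_max lexx.
  rewrite G0 subr0 -invf_div.
  rewrite -(invrK A') lef_pV2 ?posrE ?divr_gt0 ?invr_gt0 //.
  exact: ltW.
have rp' : 0 < rho by rewrite lt_neqAle eq_sym rp r0.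
exists (rho^-1)%:E; split.
  by rewrite lte_fin invf_gt1.
apply/fine_cvgP; split; first exact: nearW.
rewrite /comp /=.
have eq' : \forall h \near 0^'+, (h / G h)^-1 = (G h - G 0) / h.
  by apply: filterS eq => h ->.
apply: cvg_trans (near_eq_cvg eq') _.
exact: cvgV.
Unshelve. all: by end_near. Qed.
Lemma main_sec : exists zeta1 : R, 0 < zeta1 < zeta2 /\
    ({within `[0, +oo[, continuous G} /\
     (forall s, 0 <= s -> 0 <= G s) /\
     (forall s, 0 < s -> 0 < G s) /\
     (exists l : \bar R, (1%:E < l)%E /\
        (fun h => ((G h - G 0) / h)%:E) @ 0^'+ --> l)) /\
    ((forall s, zeta1 <= s <= zeta2 -> zeta1 <= G s <= zeta2) /\
     (forall s, 0 <= s -> 0 <= G s <= zeta2)) /\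
    ((forall s, zeta1 <= s <= zeta2 -> G zeta1 <= G s) /\
     (forall s, 0 < s <= zeta1 -> s < G s)).
Proof.
have [eps eps0 Heps] := Gbig.
set e1 := Num.min (eps / 2) (zeta2 / 2).
have e10 : 0 < e1 by rewrite lt_min !divr_gt0.
have e1eps : e1 < eps.
  apply: (@le_lt_trans _ _ (eps / 2)); first by rewrite ge_min lexx.
  by rewrite ltr_pdivrMr // ltr_pMr // ltr1n.
have e1z : e1 < zeta2.
  apply: (@le_lt_trans _ _ (zeta2 / 2)); first by rewrite ge_min lexx orbT.
  by rewrite ltr_pdivrMr // ltr_pMr // ltr1n.
have Gsub a : 0 <= a -> {within `[a, zeta2], continuous G}.
  move=> a0; apply: continuous_subspaceW G_cont => x /=.
  by rewrite !in_itv /= andbT => /andP[/(le_trans a0)].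
have [c1 c1in Hm] := EVT_min (ltW e1z) (Gsub _ (ltW e10)).
set m := G c1.
have m0 : 0 < m.
  by apply: G_pos; move: c1in; rewrite in_itv /= => /andP[/(lt_le_trans e10)].
have [_ h2] := (continuous_within_itvcyP 0 _).1 G_cont.
move/cvgrPdist_lt: h2 => /(_ _ m0) [eta /= eta0 Heta].
set a := Num.min (eta / 2) e1.
have a0 : 0 < a by rewrite lt_min divr_gt0 // e10.
have ae1 : a <= e1 by rewrite ge_min lexx orbT.
have Ga : G a < m.
  have : `|G 0 - G a| < m.
    apply: Heta => //=; rewrite sub0r normrN gtr0_norm //.
    apply: (@le_lt_trans _ _ (eta / 2)); first by rewrite ge_min lexx.
    by rewrite ltr_pdivrMr // ltr_pMr // ltr1n.
  by rewrite G0 sub0r normrN gtr0_norm // G_pos.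
have az : a <= zeta2 by rewrite (le_trans ae1) // ltW.
have [t tin Ht] := EVT_min az (Gsub _ (ltW a0)).
move: tin; rewrite in_itv /= => /andP[aLt tz].
have te1 : t < e1.
  rewrite ltNge; apply/negP => e1t.
  have : m <= G t by apply: Hm; rewrite in_itv /= e1t tz.
  have : G t <= G a by apply: Ht; rewrite in_itv /= lexx az.
  move=> h1 h3; have := le_lt_trans (le_trans h3 h1) Ga; by rewrite ltxx.
have t0 : 0 < t by exact: lt_le_trans a0 aLt.
have teps : t < eps by exact: lt_trans e1eps.
have tGt : t < G t by apply: Heps; rewrite t0.
exists t; split; first by rewrite t0 (lt_trans te1).
split.
  split; first exact: G_cont.
  split; first by move=> s s0; have [/andP[]] := G_spec s0.
  split; first by move=> s; exact: G_pos.
  exact: Gder.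
split.
  split.
    move=> s /andP[ts sz].
    have s0 : 0 <= s by rewrite (le_trans (ltW t0)).
    have [/andP[_ ->] _] := G_spec s0; rewrite andbT.
    apply: (le_trans (ltW tGt)); apply: Ht; rewrite in_itv /= sz andbT.
    exact: le_trans aLt ts.
  by move=> s s0; have [] := G_spec s0.
split.
  move=> s /andP[ts sz]; apply: Ht; rewrite in_itv /= sz andbT.
  exact: le_trans aLt ts.
move=> s /andP[s0 st]; apply: Heps; rewrite s0 /=.
exact: le_lt_trans st teps.
Qed.
End Main.

Theorem lemma1p6 (R : realType) (d : measure_display) (X : measurableType d)
  (mu : {finite_measure set X -> \bar R})
  (K : R * X -> R) (g : R -> X -> R) (g'0 : X -> R)
  (* standing assumptions on K *)
  (K_meas : measurable_fun setT K)
  (K_ge0 : forall p, 0 <= K p)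
  (K_int : (lebesgue_measure \x mu)%E.-integrable setT (EFin \o K))
  (K_pos : forall tau, (0 < kint K tau)%E)
  (* standing assumptions on g *)
  (g_meas : measurable_fun [set p : R * X | 0 <= p.1] (fun p => g p.1 p.2))
  (g_ge0 : forall v tau, 0 <= v -> 0 <= g v tau)
  (g0 : forall tau, g 0 tau = 0)
  (g_cont : forall tau, {within `[0, +oo[, continuous (fun v => g v tau)})
  (g'0_der : forall tau,
     (fun h => (g h tau - g 0 tau) / h) @ 0^'+ --> g'0 tau)
  (g'0_pos : forall tau, 0 < g'0 tau)
  (* chi(0) < 0 *)
  (chi0 : (chi mu K g'0 0 < 0)%E)
  (* condition (C) *)
  (HC : condC mu K g)
  (* condition (N1) *)
  (tau0 : X) (tau0_meas : measurable [set tau0])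
  (tau0_mu : mu [set tau0] = 1%E)
  (g_incr : forall tau, tau <> tau0 ->
     forall v w, 0 <= v -> v <= w -> g v tau <= g w tau)
  (g_tau0_pos : forall v, 0 < v -> 0 < g v tau0)
  (* condition (N2) *)
  (zeta2 : R) (zeta2_pos : 0 < zeta2)
  (Theta_incr : forall v w, 0 <= v -> v < w -> w <= zeta2 ->
     Theta mu K g tau0 v < Theta mu K g tau0 w)
  (M : R) (M_attained : exists v, 0 <= v /\ g v tau0 = M)
  (M_max : forall v, 0 <= v -> g v tau0 <= M)
  (HN2 : fine (kint K tau0) * M < Theta mu K g tau0 zeta2) :
  let G := Gmap mu K g tau0 zeta2 in
  exists zeta1 : R, 0 < zeta1 < zeta2 /\
    (* (1) *)
    ({within `[0, +oo[, continuous G} /\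
     (forall s, 0 <= s -> 0 <= G s) /\
     (forall s, 0 < s -> 0 < G s) /\
     (exists l : \bar R, (1%:E < l)%E /\
        (fun h => ((G h - G 0) / h)%:E) @ 0^'+ --> l)) /\
    (* (2) *)
    ((forall s, zeta1 <= s <= zeta2 -> zeta1 <= G s <= zeta2) /\
     (forall s, 0 <= s -> 0 <= G s <= zeta2)) /\
    (* (3) *)
    ((forall s, zeta1 <= s <= zeta2 -> G zeta1 <= G s) /\
     (forall s, 0 < s <= zeta1 -> s < G s)).
Proof.
move=> G.
by eapply main_sec; eassumption.
Qed.
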